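(* Let $a,b$ be positive integers and let $k$ be an integer with $1\leq k\leq a+b$. Then $$\psi_k(K_{a,b})=\begin{cases}a+b & \text{if } k=1,\\ \min\{a,b\}-\left\lfloor \frac{k}{2}\right\rfloor+1 & \text{if } 1<k\leq 2\min\{a,b\}+1,\\ 0 & \text{otherwise.}\end{cases}$$
   Context: All graphs are finite, simple and nonempty. For a graph $G$ and a positive integer $k$, a $k$-path vertex cover ($k$-PVC) of $G$ is a set $S$ of vertices such that every path on $k$ vertices in $G$ contains at least one vertex of $S$ (if $G$ has no path on $k$ vertices, the empty set is a $k$-PVC). $\psi_k(G)$ denotes the minimum cardinality of a $k$-PVC of $G$. $K_{a,b}$ is the complete bipartite graph with parts of sizes $a$ and $b$. *)

(* Defs.v *)
From mathcomp Require Import all_boot.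
Set Implicit Arguments. Unset Strict Implicit. Unset Printing Implicit Defensive.

(* A (simple) graph is given by a finite vertex type T and an adjacency
   relation e : rel T (symmetric and irreflexive for the graphs we use). *)

Definition is_kpath (T : finType) (e : rel T) (k : nat) (p : seq T) : bool :=
  [&& size p == k, uniq p &
      match p with [::] => true | x :: s => path e x s end].

Definition is_kpvc (T : finType) (e : rel T) (k : nat) (S : {set T}) : bool :=
  [forall t : k.-tuple T, is_kpath e k t ==> has (mem S) t].

(* psi_k(G): minimum cardinality of a k-PVC (the whole vertex set is always a
   k-PVC for k >= 1, so #|T| is a harmless default/upper bound). *)
Definition psi (T : finType) (e : rel T) (k : nat) : nat :=
  \big[minn/#|T|]_(S : {set T} | is_kpvc e k S) #|S|.

Definition Kab_rel (a b : nat) : rel ('I_a + 'I_b)%type :=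
  fun x y => match x, y with
             | inl _, inr _ | inr _, inl _ => true
             | _, _ => false
             end.
Arguments Kab_rel a b : clear implicits.

(* Main.v *)
Require Import Defs.
From mathcomp Require Import all_boot zify.


Section K.
Variables a b : nat.
Local Notation T := ('I_a + 'I_b)%type.
Local Notation e := (Kab_rel a b).

Definition isl (x : T) : bool := if x is inl _ then true else false.
Definition vl (x : T) : nat := match x with inl i => val i | inr j => val j end.
Definition N (s : bool) := if s then a else b.

Lemma KabE x y : e x y = (isl x != isl y).
Proof. by case: x; case: y. Qed.

Lemma vl_lt x s : isl x = s -> vl x < N s.
Proof. by case: x => i <-; rewrite /= ltn_ord. Qed.

Lemma bound (l : seq T) (s : bool) lo hi : uniq l ->
  (forall x, x \in l -> isl x = s /\ lo <= vl x < hi) -> size l <= hi - lo.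
Proof.
move=> ul H.
have inj : {in l &, injective vl}.
  move=> x y /H [hx _] /H [hy _]; case: x hx => [i|i] hx; case: y hy => [j|j] hy;
  rewrite -?hx //= in hy * => /val_inj -> //.
rewrite -(size_map vl) -(size_iota lo (hi - lo)).
apply: uniq_leq_size; first by rewrite map_inj_in_uniq.
move=> y /mapP [x /H [_ /andP [h1 h2]] ->]; rewrite mem_iota; apply/andP; lia.
Qed.

Lemma bal x t : path e x t ->
  let cl := count isl (x :: t) in let cr := count (predC isl) (x :: t) in
  (isl x -> cr <= cl <= cr + 1) /\ (~~ isl x -> cl <= cr <= cl + 1).
Proof.
elim: t x => [|y t IH] x /=.
  by move=> _; case: (isl x).
case/andP; rewrite KabE => hxy /IH /=.
by case: (isl x) hxy; case: (isl y) => //= _ [h1 h2]; split=> // _;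
  first [move: (h1 isT) | move: (h2 isT)]; lia.
Qed.

Lemma kpath_bal k (t : seq T) : is_kpath e k t ->
  [/\ size t = k, uniq t, k <= 2 * count isl t + 1 & k <= 2 * count (predC isl) t + 1].
Proof.
case/and3P => /eqP <- ut.
case: t ut => [|x t] ut /=; first by move=> _; split.
move=> /bal; have := count_predC isl (x :: t); rewrite /= => hc.
case: (isl x) hc => /= hc [h1 h2]; split=> //.
- move: (h1 isT); lia.
- move: (h1 isT); lia.
- move: (h2 isT); lia.
- move: (h2 isT); lia.
Qed.

Lemma psi_le k (S : {set T}) : is_kpvc e k S -> psi e k <= #|S|.
Proof.
rewrite /psi => hS.
have : S \in index_enum {set T} by rewrite mem_index_enum.
elim: (index_enum _) => [//|X l IH]; rewrite inE big_cons.
case/orP => [/eqP <-|/IH h]; first by rewrite hS geq_minl.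
by case: ifP => _ //; rewrite geq_min h orbT.
Qed.

Lemma psi_ge k v : v <= #|{: T}| -> (forall S, is_kpvc e k S -> v <= #|S|) -> v <= psi e k.
Proof.
move=> h1 h2; rewrite /psi; elim/big_ind: _ => // x y hx hy.
by rewrite leq_min hx hy.
Qed.

Lemma cardT : #|{: T}| = a + b.
Proof. by rewrite card_sum !card_ord. Qed.

Lemma upper k s c : 2 * (N s - c) + 1 < k -> psi e k <= c.
Proof.
move=> hk.
have [S memS] : exists S : {set T}, forall y, (y \in S) = (isl y == s) && (vl y < c).
  by exists [set x : T | (isl x == s) && (vl x < c)] => y; rewrite inE.
apply: (@leq_trans #|S| _ _ (@psi_le k S _)).
  apply/forallP => t; apply/implyP => /kpath_bal [hs ut h1 h2].
  apply/negPn/negP => hn.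
  have : count (fun x => isl x == s) t <= N s - c.
    rewrite -size_filter; apply: (@bound _ s c (N s) (filter_uniq _ ut)) => x.
    rewrite mem_filter => /andP [/eqP hx xt]; split=> //.
    have := @vl_lt x s hx; case: (leqP c (vl x)) => hc hv; first by apply/andP.
    exfalso.
    move/negP: hn; apply; apply/hasP; exists x => //; by rewrite inE memS hx eqxx hc.
  case: s hk hn memS => hk hn _ hc.
  - have e1 : count (fun x => isl x == true) t = count isl t by apply: eq_count => y /=; case: (isl y).
    rewrite e1 /N in hc hk; lia.
  - have e1 : count (fun x => isl x == false) t = count (predC isl) t by apply: eq_count => y /=; case: (isl y).
    rewrite e1 /N in hc hk; lia.
rewrite cardE -(size_map vl) -(size_iota 0 c); apply: uniq_leq_size.
  rewrite map_inj_in_uniq ?enum_uniq //.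
  move=> x y; rewrite !mem_enum !memS => /andP [/eqP hx _] /andP [/eqP hy _].
  case: x hx => [i|i] hx; case: y hy => [j|j] hy;
  rewrite -?hx //= in hy * => /val_inj -> //.
by move=> y /mapP [x]; rewrite mem_enum memS => /andP [_ h] ->; rewrite mem_iota.
Qed.


Fixpoint gen (n : nat) (X Y : seq T) : seq T :=
  match n with 0 => [::] | n'.+1 => if X is x :: X' then x :: gen n' Y X' else [::] end.

Lemma gen_size n X Y : n <= 2 * size X -> n <= 2 * size Y + 1 -> size (gen n X Y) = n.
Proof.
elim: n X Y => [|n IH] [|x X] Y //= h1 h2.
congr _.+1; apply: IH; lia.
Qed.

Lemma gen_sub n X Y : {subset gen n X Y <= X ++ Y}.
Proof.
elim: n X Y => [|n IH] [|x X] Y //= z; rewrite inE => /orP [/eqP -> //| /IH].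
  by rewrite inE eqxx.
by rewrite inE !mem_cat => /orP [->|->]; rewrite ?orbT.
Qed.

Lemma gen_uniq n X Y : uniq (X ++ Y) -> uniq (gen n X Y).
Proof.
elim: n X Y => [|n IH] [|x X] Y //= /andP [hx hu].
rewrite IH ?andbT; last by rewrite uniq_catC.
apply/negP => /gen_sub; rewrite mem_cat => /orP [hy|hy]; move/negP: hx; apply;
  by rewrite mem_cat hy ?orbT.
Qed.

Definition pathlike (l : seq T) : bool := if l is x :: r then path e x r else true.

Lemma gen_path n X Y s : all (fun z => isl z == s) X -> all (fun z => isl z == ~~ s) Y ->
  pathlike (gen n X Y).
Proof.
elim: n X Y s => [|n IH] [|x X] Y s //= /andP [hx hX] hY.
have := IH Y X (~~ s) hY; rewrite negbK => /(_ hX).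
case: n {IH} => [|n] //=; case: Y hY => [|y Y] //= /andP [hy _] ->.
by rewrite andbT KabE (eqP hx) (eqP hy); case: (s).
Qed.

Definition cnt (S : {set T}) (s : bool) := size [seq x <- enum (~: S) | isl x == s].

Lemma lower k (S : {set T}) s :
  k <= 2 * cnt S s -> k <= 2 * cnt S (~~ s) + 1 -> ~~ is_kpvc e k S.
Proof.
rewrite /cnt.
set X := [seq x <- _ | _]; set Y := [seq x <- _ | _] => h1 h2.
have hs := @gen_size k X Y h1 h2.
apply/negP => /forallP /(_ (@Tuple k T (gen k X Y) (introT eqP hs))) /implyP.
have memXY z : z \in X ++ Y -> z \notin S.
  rewrite /X /Y mem_cat !mem_filter => /orP [/and3P [_ h _]|/and3P [_ h _]];
  by move: h; rewrite !inE.
have uXY : uniq (X ++ Y).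
  have uX : uniq X by apply: filter_uniq; exact: enum_uniq.
  have uY : uniq Y by apply: filter_uniq; exact: enum_uniq.
  rewrite cat_uniq uX uY andbT /=; apply/hasPn => z.
  rewrite /X /Y !mem_filter => /andP [/eqP h2' _]; apply/negP => /andP [/eqP h1' _].
  by rewrite h1' in h2'; case: (s) h2'.
have hp : pathlike (gen k X Y).
  apply: (@gen_path k X Y s); apply/allP => z; rewrite mem_filter => /andP [] //.
change ((is_kpath e k (gen k X Y) -> has (mem S) (gen k X Y)) -> False).
rewrite /is_kpath hs eqxx gen_uniq //.
have -> : (match gen k X Y with [::] => true | x :: r => path e x r end) = true by exact: hp.
move=> /(_ isT) /hasP [z /gen_sub /memXY hz]; rewrite inE => hz'.
by rewrite hz' in hz.
Qed.

Lemma split_size0 (l : seq T) s :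
  size [seq x <- l | isl x == s] + size [seq x <- l | isl x == ~~ s] = size l.
Proof. elim: l => //= x l IH; case: (isl x); case: s IH => /= IH; lia. Qed.

Lemma split_size (S : {set T}) s : cnt S s + cnt S (~~ s) + #|S| = a + b.
Proof. by rewrite /cnt split_size0 -cardE addnC cardsC cardT. Qed.

Lemma side_bound (S : {set T}) s : cnt S s <= N s.
Proof.
rewrite /cnt.
have -> : N s = N s - 0 by rewrite subn0.
apply: (@bound _ s) => [|x]; first by rewrite filter_uniq ?enum_uniq.
by rewrite mem_filter => /andP [/eqP hx _]; rewrite hx (@vl_lt x s hx).
Qed.

End K.

Theorem mainTheorem1 (a b k : nat) :
  0 < a -> 0 < b -> 1 <= k <= a + b ->
  psi (Kab_rel a b) k =
    if k == 1 then a + b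
    else if k <= 2 * minn a b + 1 then minn a b - k./2 + 1
    else 0.
Proof.
move=> ha hb /andP [hk1 hk2].
have cT := cardT a b.
have [s [hNs hNo]] : exists s, N a b s = minn a b /\ N a b (~~ s) = maxn a b.
  case: (leqP a b) => hab; [exists true | exists false]; rewrite /N /=; lia.
have up c : 2 * (minn a b - c) + 1 < k -> psi (Kab_rel a b) k <= c.
  by rewrite -hNs; apply: upper.
have [h [r [hr hkh]]] : exists h, exists r, r <= 1 /\ k = 2 * h + r /\ h = k./2.
  exists k./2, (odd k); split; first by case: odd.
  split=> //; rewrite -[k in LHS]odd_double_half -muln2; lia.
case: eqP => [k1|k1].
  apply/eqP; rewrite eqn_leq; apply/andP; split.
    rewrite -cT -cardsT; apply: psi_le; apply/forallP => t; apply/implyP.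
    move=> /kpath_bal [hs _ _ _]; case: (tval t) hs => [|x l] hs; first by rewrite -hs in hk1.
    by rewrite /= inE.
  apply: psi_ge; first by rewrite cT.
  move=> S; rewrite k1 => hS; rewrite -cT; apply: subset_leq_card; apply/subsetP => x _.
  move: (forallP hS [tuple x]); rewrite /is_kpath /= orbF; exact.
case: ifP => hkm.
  apply/eqP; rewrite eqn_leq; apply/andP; split.
    apply: up; move: hkh => [hk hh]; rewrite -hh; lia.
  apply: psi_ge; first by rewrite cT; move: hkh => [hk hh]; rewrite -hh; lia.
  move=> S hS; rewrite leqNgt; apply/negP => hlt.
  have sp : cnt a b S true + cnt a b S false + #|S| = a + b := @split_size a b S true.
  have bT := @side_bound a b S true.
  have bF := @side_bound a b S false.
  rewrite /N /= in bT bF sp.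
  move: hkh => [hk hh]; rewrite -hh in hlt.
  have {}hlt : #|S| < minn a b - h + 1 := hlt.
  case: (leqP k (2 * cnt a b S true)) => hc.
    have h2 : k <= 2 * cnt a b S (~~ true) + 1.
      rewrite /=; move: hlt sp hc bT hk hr hkm.
      move: #|S| (cnt a b S true) (cnt a b S false) => q x y; lia.
    by move/negP: (@lower a b k S true hc h2).
  have h1 : k <= 2 * cnt a b S false.
    move: hlt sp hc bT hk hr hkm hk2.
    move: #|S| (cnt a b S true) (cnt a b S false) => q x y; lia.
  have h2 : k <= 2 * cnt a b S (~~ false) + 1.
    rewrite /=; move: hlt sp hc bT bF hk hr hkm.
    move: #|S| (cnt a b S true) (cnt a b S false) => q x y; lia.
  by move/negP: (@lower a b k S false h1 h2).
apply/eqP; rewrite -leqn0; apply: up; move/negbT: hkm; rewrite -ltnNge; lia.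
Qed.
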